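(* Let $m\ge5$ be odd and $h=\frac{m-1}{2}$. For every $j\in\Gamma_{(h)}$: (i) if $j\neq1$, then $j+2^{h+1}$ is the coset leader of $C_{j+2^{h+1}}$, and the coset leader of $C_{1+2^{h+1}}$ is $1+2^h$; (ii) $|C_{j+2^{h+1}}|=m$.
   Context: Let $v=2^m-1$. For an integer $i$, $C_i=\{i\cdot 2^s \bmod v: s\ge 0\}$ is the $2$-cyclotomic coset of $i$ modulo $v$, and its least element is its coset leader. For a positive integer $t$, $\Gamma_{(t)}=\{j:1\le j\le 2^t-1,\ j\text{ odd}\}$. *)

(* Defs.v *)
From mathcomp Require Import all_boot.
Set Implicit Arguments. Unset Strict Implicit. Unset Printing Implicit Defensive.

Definition cyc_mod (m : nat) : nat := 2 ^ m - 1.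

Definition in_coset (m i x : nat) : Prop :=
  exists s : nat, x = (i * 2 ^ s) %% cyc_mod m.

Definition coset_leader (m i l : nat) : Prop :=
  in_coset m i l /\ forall x, in_coset m i x -> l <= x.

Definition coset_card (m i n : nat) : Prop :=
  exists s : seq nat,
    [/\ uniq s, size s = n & forall x, x \in s <-> in_coset m i x].

Definition Gamma (t : nat) : pred nat :=
  fun j => [&& odd j, 1 <= j & j <= 2 ^ t - 1].

(* Main.v *)
Require Import Defs.
From mathcomp Require Import all_boot.
From mathcomp Require Import zify.

Lemma rot (m s q r k : nat) : s <= m -> k = q * 2^(m-s) + r -> r < 2^(m-s) ->
  q < 2^s -> k < 2^m - 1 -> (k * 2^s) %% (2^m-1) = q + r * 2^s.
Proof.
move=> sm -> rl ql kl.
have E : 2^m = 2^s * 2^(m-s) by rewrite -expnD subnKC.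
move: kl rl ql; rewrite E.
set P := 2^s; set Q := 2^(m-s) => kl rl ql.
have P1 : 0 < P by rewrite expn_gt0.
have -> : (q * Q + r) * P = q * (P * Q - 1) + (q + r * P).
  have : 1 <= P * Q by nia.
  nia.
rewrite modnMDl modn_small //.
have [rlt|req] : r < Q - 1 \/ r = Q - 1 by lia.
  nia.
subst r. nia.
Qed.

Lemma per m k s : (k * 2^s) %% (2^m-1) = (k * 2^(s %% m)) %% (2^m-1).
Proof.
rewrite {1}(divn_eq s m) expnD (mulnC (s %/ m) m) expnM.
rewrite (mulnC ((2^m)^(s %/ m))) mulnA.
rewrite -modnMmr -modnXm.
have -> : 2 ^ m %% (2 ^ m - 1) = 1 %% (2^m - 1).
  have h1 : 0 < 2 ^ m by rewrite expn_gt0.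
  by rewrite -{1}(subnKC h1) modnDr.
by rewrite modnXm exp1n modnMmr muln1.
Qed.

Lemma A1 k P : 0 < k -> 2 <= P -> k * P <> k. Proof. nia. Qed.
Lemma A2 j P : 4 <= P -> 1 + j * P <> j + 2 * P.
Proof. move=> H. case: j => [|[|[|i]]]; rewrite ?mul0n ?mul1n; try lia. have : 4 * i <= i * P by rewrite mulnC leq_mul2l H orbT. rewrite (_ : i.+3 * P = i * P + 3 * P); last by rewrite -mulnDl addn3. lia. Qed.
Lemma A3 k Q : 1 <= Q -> k <= k * Q. Proof. nia. Qed.
Lemma A4 j P : 3 <= j -> 4 <= P -> j + 2 * P <= 1 + j * P. Proof. nia. Qed.
Lemma A5 j P : 1 <= j -> 1 <= P -> j + 2 * P <= 2 + j * (2 * P). Proof. nia. Qed.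

Section K.
Variables (h j : nat).
Hypothesis (h2 : 2 <= h) (jo : odd j) (j1 : 1 <= j) (jl : j < 2 ^ h).
Let m := h * 2 + 1.
Let k := j + 2 ^ h.+1.
Let f s := (k * 2^s) %% (2^m - 1).

Lemma P4 : 4 <= 2 ^ h.
Proof. by rewrite (_ : 4 = 2 ^ 2) // leq_pexp2l. Qed.

Lemma kbound : k < 2 ^ h.+2.
Proof. rewrite /k !expnS; lia. Qed.

Lemma mbound : 2 * 2 ^ h.+2 <= 2 ^ m.
Proof. rewrite -expnS leq_pexp2l // /m; lia. Qed.

Lemma kodd : odd k.
Proof. by rewrite /k oddD jo oddX. Qed.

Lemma key s : s < m ->
 [/\ s = 0 -> f s = k, 0 < s < h -> f s = k * 2^s, s = h -> f s = 1 + j * 2^h,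
     s = h.+1 -> f s = 2 + j * 2^h.+1 & h.+1 < s -> 2^s <= f s].
Proof.
move=> sm.
have kb := kbound; have mb := mbound; have p4 := P4.
have kv : k < 2 ^ m - 1 by lia.
split.
- move=> ->; rewrite /f expn0 muln1 modn_small //.
- case/andP=> s0 sh; rewrite /f (@rot m s 0 k k) //; first lia.
  + apply: (leq_trans kb); rewrite leq_pexp2l //; rewrite /m; lia.
  + by rewrite expn_gt0.
- move=> ->; rewrite /f (@rot m h 1 j k) //; first by rewrite /m; lia.
  + rewrite (_ : m - h = h.+1); last by rewrite /m; lia.
    by rewrite /k mul1n addnC.
  + rewrite (_ : m - h = h.+1); last by rewrite /m; lia.
    rewrite expnS; lia.
  + lia.
- move=> ->; rewrite /f (@rot m h.+1 2 j k) //; first by rewrite /m; lia.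
  + rewrite (_ : m - h.+1 = h); last by rewrite /m; lia.
    by rewrite /k addnC expnS.
  + by rewrite (_ : m - h.+1 = h); last by rewrite /m; lia.
  + rewrite expnS; lia.
- move=> hs.
  have Q1 : 0 < 2 ^ (m - s) by rewrite expn_gt0.
  have r1 : 0 < k %% 2 ^ (m - s).
    rewrite lt0n; apply/negP => /eqP/eqP; rewrite -/(dvdn _ _) => d.
    have : 2 %| k.
      apply: dvdn_trans d; rewrite (_ : 2 = 2 ^ 1) // dvdn_exp2l //; rewrite /m; lia.
    by rewrite dvdn2 kodd.
  rewrite /f (@rot m s (k %/ 2 ^ (m - s)) (k %% 2 ^ (m - s)) k) //.
  + have := leq_mul r1 (leqnn (2 ^ s)); rewrite mul1n; move=> H; exact: (leq_trans H (leq_addl _ _)).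
  + lia.
  + exact: divn_eq.
  + by rewrite ltn_pmod.
  + apply: (leq_ltn_trans (leq_div _ _)); apply: (leq_trans kb).
    by rewrite leq_pexp2l.
Qed.

Lemma fle s : f s = f (s %% m).
Proof. exact: per. Qed.

Lemma fne d : 0 < d < m -> f d <> k.
Proof.
move=> /andP[d0 dm]; have [K0 K1 K2 K3 K4] := @key d dm.
have p4 := P4; have kb := kbound; have ko := kodd.
have [d1|] := ltnP d h.
  rewrite K1; last by rewrite d0 d1.
  apply: A1; first by rewrite /k; lia.
  by rewrite (_ : 2 = 2 ^ 1) // leq_pexp2l.
rewrite leq_eqVlt => /orP[/eqP dh|].
  rewrite K2 // /k expnS; exact: A2.
rewrite leq_eqVlt => /orP[/eqP dh|hd].
  rewrite K3 // => e.
  have : odd (2 + j * 2 ^ h.+1) by rewrite e.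
  by rewrite oddD oddM oddX andbF.
have : 2 ^ h.+2 <= 2 ^ d by rewrite leq_pexp2l.
have := K4 hd; lia.
Qed.

Lemma lower1 s : j != 1 -> k <= f s.
Proof.
move=> jn1; rewrite fle.
have sm : s %% m < m by rewrite ltn_pmod // /m; lia.
move: (s %% m) sm => d dm.
have [K0 K1 K2 K3 K4] := @key d dm.
have p4 := P4; have kb := kbound.
have j3 : 3 <= j by move: jn1 jo j1; case: j => [|[|[|]]].
case: (posnP d) => [d0|d0]; first by rewrite K0.
have [d1|] := ltnP d h.
  rewrite K1; last by rewrite d0 d1.
  apply: A3; by rewrite expn_gt0.
rewrite leq_eqVlt => /orP[/eqP dh|].
  rewrite K2 // /k expnS; exact: A4.
rewrite leq_eqVlt => /orP[/eqP dh|hd].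
  rewrite K3 // /k expnS; apply: A5 => //; lia.
have : 2 ^ h.+2 <= 2 ^ d by rewrite leq_pexp2l.
have := K4 hd; lia.
Qed.

End K.

Theorem lemma9 (m : nat) (Hm : 5 <= m) (Hodd : odd m) (j : nat)
  (Hj : Gamma ((m - 1) %/ 2) j) :
  let h := (m - 1) %/ 2 in
  [/\ (j != 1 -> coset_leader m (j + 2 ^ h.+1) (j + 2 ^ h.+1)),
      coset_leader m (1 + 2 ^ h.+1) (1 + 2 ^ h)
    & coset_card m (j + 2 ^ h.+1) m].
Proof.
move=> h.
have Em : m = h * 2 + 1.
  have := divn_eq (m-1) 2; rewrite modn2 oddB; last lia.
  rewrite Hodd /= -/h; lia.
have h2 : 2 <= h by lia.
move: Hj; rewrite /Gamma => /and3P[jo j1 jl].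
have jl' : j < 2 ^ h.
  move: jl; rewrite -/h => jl.
  have : 0 < 2 ^ h by rewrite expn_gt0.
  lia.
rewrite /coset_leader /coset_card /in_coset /cyc_mod.
have kv : j + 2 ^ h.+1 < 2 ^ m - 1.
  have := (@kbound h j h2 jo j1 jl'); have := (@mbound h j h2 jo j1 jl'); rewrite -Em; lia.
split.
- move=> jn1; split.
    exists 0; rewrite expn0 muln1 modn_small //; exact: kv.
  move=> x [s ->]; rewrite Em; exact: lower1.
- have j1o : odd 1 by [].
  have l2 : 1 < 2 ^ h by rewrite -{1}(expn0 2) ltn_exp2l //; lia.
  have hm : h < h * 2 + 1 by lia.
  have [K0 K1 K2 K3 K4] := (@key h 1 h2 isT (leqnn 1) l2 h hm).
  split.
    exists h; rewrite Em; move: (K2 erefl) => /= ->; by rewrite mul1n.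
  move=> x [s ->]; rewrite Em (@fle h 1) /=.
  have dm' : s %% (h * 2 + 1) < h * 2 + 1 by rewrite ltn_pmod //; lia.
  move: (s %% _) dm' => d dm'.
  have [L0 L1 L2 L3 L4] := (@key h 1 h2 isT (leqnn 1) l2 d dm').
  have p4 := (@P4 h h2).
  case: (posnP d) => [d0|d0]; first by rewrite L0 // expnS; lia.
  have [d1|] := ltnP d h.
    rewrite L1; last by rewrite d0 d1.
    have Q : 1 <= 2 ^ d by rewrite expn_gt0.
    apply: (leq_trans _ (@A3 _ _ Q)); by rewrite leq_add2l leq_pexp2l.
  rewrite leq_eqVlt => /orP[/eqP dh|].
    by rewrite L2 // mul1n addnC.
  rewrite leq_eqVlt => /orP[/eqP dh|hd].
    rewrite L3 // mul1n expnS; clear -p4; lia.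
  apply: leq_trans (L4 hd).
  apply: (@leq_trans (2^h.+2)); [rewrite !expnS; clear -p4; lia | by rewrite leq_pexp2l].
- exists [seq ((j + 2 ^ h.+1) * 2 ^ i) %% (2 ^ m - 1) | i <- iota 0 m].
  split.
  + rewrite map_inj_in_uniq ?iota_uniq //.
    move=> s t; rewrite !mem_iota !add0n => sm tm.
    wlog st : s t sm tm / s <= t.
      move=> W e; have [/W|/ltnW/W] := leqP s t; first by apply.
      by move=> W'; symmetry; apply: W' => //.
    move=> e; apply/eqP; rewrite eqn_leq st /=; rewrite leqNgt; apply/negP => ts.
    apply: (@fne h j h2 jo j1 jl' (s + (m - t))).
      rewrite -Em; lia.
    rewrite -Em expnD mulnA -modnMml e modnMml -mulnA -expnD subnKC; last lia.
    rewrite per modnn expn0 muln1 modn_small //; exact: kv.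
  + by rewrite size_map size_iota.
  + move=> x; split.
      by case/mapP=> i _ ->; exists i.
    case=> s ->; rewrite per; apply: map_f.
    rewrite mem_iota add0n ltn_pmod //; lia.
Qed.
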